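(* Let $(I,\preceq)$ be a finite poset with $|I|=n$. For each $i\in I$ let $X_i$ be a finite set with $|X_i|\geq 2$, and let $P_i=(p_i(x_i,y_i))_{x_i,y_i\in X_i}$ be an arbitrary Markov chain (stochastic matrix) on $X_i$. Let $\{p_i^0\}_{i\in I}$ be a strict probability measure on $I$, and let $\mathcal{P}$ be the generalized crested product of the $P_i$ defined by $(I,\preceq)$ and $\{p_i^0\}$. Let $R\subseteq I$, and let $\mathcal{L}=\{L_1,\ldots,L_t\}$ be the partition of $X=\prod_{i\in I}X_i$ into the classes of the equivalence relation $x\sim y \iff x_i=y_i$ for all $i\in I\setminus R$. Then $\mathcal{P}$ is lumpable with respect to $\mathcal{L}$, i.e. for all $k,s\in\{1,\ldots,t\}$ the function $x\mapsto \mathcal{P}(x,L_s)=\sum_{y\in L_s}p(x,y)$ is constant on $L_k$.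
   Context: For $i\in I$, $H(i)=\{j\in I: j\prec i\}$ and $H[i]=H(i)\sqcup\{i\}$. A strict probability measure on $I$ means $p_i^0>0$ for all $i$ and $\sum_i p_i^0=1$. The generalized crested product is the Markov chain on $X=\prod_{i\in I}X_i$ with transition probabilities $$p(x,y)=\sum_{i\in I}p_i^0\,p_i(x_i,y_i)\prod_{j\in H(i)}\frac{1}{|X_j|}\prod_{j\notin H[i]}\delta(x_j,y_j),$$ where $\delta$ is the Kronecker delta; equivalently its operator is $\sum_{i\in I}p_i^0\,P_i\otimes(\bigotimes_{j\in H(i)}U_j)\otimes(\bigotimes_{j\notin H[i]}I_j)$ with $U_j$ the uniform operator (all entries $1/|X_j|$) and $I_j$ the identity on $X_j$. A Markov chain with transition matrix $p$ on a finite set $X$ is lumpable with respect to a partition $\{L_1,\dots,L_t\}$ of $X$ if for all $k,s$ the map $x\mapsto\sum_{y\in L_s}p(x,y)$ is constant on $L_k$. *)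

(* Defs.v *)
From HB Require Import structures.
From mathcomp Require Import all_boot all_order all_algebra.
Set Implicit Arguments. Unset Strict Implicit. Unset Printing Implicit Defensive.
Import Order.TTheory GRing.Theory Num.Theory.
Local Open Scope ring_scope.
Local Open Scope order_scope.

Definition stochastic (K : numDomainType) (S : finType) (P : S -> S -> K) :=
  (forall x y, 0 <= P x y) /\ (forall x, \sum_(y : S) P x y = 1).

Definition strict_prob (K : numDomainType) (I : finType) (p0 : I -> K) :=
  (forall i, 0 < p0 i) /\ \sum_(i : I) p0 i = 1.

Definition crested_product (K : fieldType) (d : Order.disp_t)
  (I : finPOrderType d) (X : I -> finType)
  (P : forall i, X i -> X i -> K) (p0 : I -> K)
  (x y : {dffun forall i, X i}) : K :=
  \sum_(i : I) (p0 i * P i (x i) (y i)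
     * \prod_(j : I | (j < i)%O) (#|X j|%:R)^-1
     * \prod_(j : I | ~~ (j <= i)%O) (x j == y j)%:R).

Definition lumpable (K : numDomainType) (T : finType) (p : T -> T -> K)
  (L : {set {set T}}) :=
  forall Lk Ls, Lk \in L -> Ls \in L ->
  forall x x', x \in Lk -> x' \in Lk ->
    \sum_(y in Ls) p x y = \sum_(y in Ls) p x' y.

Definition agree_off (I : finType) (X : I -> finType) (R : {set I})
  (x y : {dffun forall i, X i}) : bool :=
  [forall i, (i \notin R) ==> (x i == y i)].

(* Main.v *)
Require Import Defs.
From HB Require Import structures.
From mathcomp Require Import all_boot all_order all_algebra.
From mathcomp Require Import fingroup perm.
Import Order.TTheory GRing.Theory Num.Theory.
Local Open Scope ring_scope.
Set Implicit Arguments. Unset Strict Implicit.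

Section Aux.
Variables (d : Order.disp_t) (I : finPOrderType d) (X : I -> finType).
Notation T := {dffun forall i, X i}.

Definition sig (s : forall j, {perm X j}) (y : T) : T := finfun (fun j => s j (y j)).
Lemma sigE s y j : sig s y j = s j (y j).
Proof. by rewrite /sig ffunE. Qed.
Lemma sig_inj s : injective (sig s).
Proof.
move=> y1 y2 h; apply/ffunP=> j.
by have := f_equal (fun f : T => f j) h; rewrite !sigE => /perm_inj.
Qed.

Lemma tperm_eqR (U : finType) (a b u : U) : (b == tperm a b u) = (a == u).
Proof. by rewrite -{1}(tpermL a b) (inj_eq perm_inj). Qed.

Definition sw (x x' : T) (i : I) : forall j, {perm X j} :=
  fun j => tperm (x j) (dfwith (fun k => x' k) (x i) j).

Lemma sw_i x x' i u : sw x x' i i u = u.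
Proof. by rewrite /sw dfwith_in tperm1 perm1. Qed.
Lemma sw_j x x' i j u : i != j -> sw x x' i j u = tperm (x j) (x' j) u.
Proof. by move=> h; rewrite /sw dfwith_out. Qed.

End Aux.
Arguments sig_inj {d I X} s [x1 x2].

Section Main.
Variables (K : realFieldType) (d : Order.disp_t) (I : finPOrderType d) (X : I -> finType).
Notation T := {dffun forall i, X i}.
Variable (R : {set I}).

Definition g (i : I) (x y : T) : K := \prod_(j : I | ~~ (j <= i)%O) ((x j == y j)%:R : K).

Lemma agreeP (x x' : T) j : agree_off R x x' -> j \notin R -> x j = x' j.
Proof. by move/forallP/(_ j)/implyP => h /h /eqP. Qed.

Lemma swap_sum i (A : pred (X i)) (F : X i -> K) (x x' z : T) :
  agree_off R x x' ->
  \sum_(y | agree_off R z y && A (y i)) F (y i) * g i x y =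
  \sum_(y | agree_off R z y && A (y i)) F (y i) * g i x' y.
Proof.
move=> hxx.
rewrite [RHS](reindex_inj (sig_inj (sw x x' i))).
have Hi y : sig (sw x x' i) y i = y i by rewrite sigE sw_i.
apply: eq_big => [y|y _].
  rewrite Hi; congr (_ && _).
  apply/forallP/forallP => h j; move: (h j); case: (boolP (j \in R)) => //= jR.
    rewrite sigE; have [->|ij] := eqVneq i j; first by rewrite sw_i.
    by rewrite sw_j // -(agreeP hxx jR) tperm1 perm1.
  rewrite sigE; have [->|ij] := eqVneq i j; first by rewrite sw_i.
  by rewrite sw_j // -(agreeP hxx jR) tperm1 perm1.
rewrite Hi; congr (_ * _); apply: eq_bigr => j hj.
have ij : i != j by apply: contraNneq hj => ->; rewrite lexx.
by rewrite sigE sw_j // tperm_eqR.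
Qed.

Definition Tsum i (x z : T) (u : X i) : K :=
  \sum_(y | agree_off R z y && (y i == u)) g i x y.
Arguments Tsum i x z u : clear implicits.

Lemma Tsum_shift i x z u c : i \in R -> Tsum i x z u = Tsum i x z c.
Proof.
move=> iR; rewrite /Tsum.
pose s := fun j => tperm (dfwith (fun k => x k) u j) (dfwith (fun k => x k) c j).
have Hi y : sig s y i = tperm u c (y i) by rewrite sigE /s !dfwith_in.
have Hj y j : i != j -> sig s y j = y j.
  by move=> ij; rewrite sigE /s !dfwith_out // tperm1 perm1.
rewrite [RHS](reindex_inj (sig_inj s)).
apply: eq_big => [y|y _].
  rewrite Hi.
  rewrite [tperm u c (y i) == c]eq_sym tperm_eqR eq_sym; congr (_ && _).
  apply/forallP/forallP => h j; move: (h j); case: (boolP (j \in R)) => //= jR.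
    by rewrite Hj //; apply: contraNneq jR => <-.
  by rewrite Hj //; apply: contraNneq jR => <-.
apply: eq_bigr => j hj.
have ij : i != j by apply: contraNneq hj => ->; rewrite lexx.
by rewrite Hj.
Qed.

Lemma per_i i (P : X i -> X i -> K) (hP : stochastic P) (x x' z : T) :
  agree_off R x x' ->
  \sum_(y | agree_off R z y) P (x i) (y i) * g i x y =
  \sum_(y | agree_off R z y) P (x' i) (y i) * g i x' y.
Proof.
move=> hxx.
case: (boolP (i \in R)) => iR; last first.
  rewrite (agreeP hxx iR).
  transitivity (\sum_(y | agree_off R z y && predT (y i)) P (x' i) (y i) * g i x y).
    by apply: eq_bigl => y; rewrite andbT.
  rewrite (swap_sum _ _ _ hxx).
  by apply: eq_bigl => y; rewrite andbT.
have E (w : T) : \sum_(y | agree_off R z y) P (w i) (y i) * g i w y = Tsum i w z (x i).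
  rewrite (partition_big (fun y : T => y i) predT) //=.
  transitivity (\sum_(u : X i) P (w i) u * Tsum i w z (x i)).
    apply: eq_bigr => u _; rewrite -(Tsum_shift (i:=i) w z u (x i) iR) /Tsum big_distrr /=.
    by apply: eq_bigr => y /andP [_ /eqP ->].
  by rewrite -big_distrl /= hP.2 mul1r.
rewrite !E /Tsum.
transitivity (\sum_(y | agree_off R z y && pred1 (x i) (y i)) (fun _ => 1) (y i) * g i x y).
  by apply: eq_bigr => y _; rewrite mul1r.
rewrite (@swap_sum i (pred1 (x i)) (fun _ => 1) x x' z hxx); apply: eq_bigr => y _; by rewrite mul1r.
Qed.
End Main.

From mathcomp Require Import ring.

Lemma key (K : realFieldType) (d : Order.disp_t) (I : finPOrderType d)
  (X : I -> finType) (P : forall i, X i -> X i -> K) (hP : forall i, stochastic (P i))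
  (p0 : I -> K) (R : {set I}) (x x' z : {dffun forall i, X i}) :
  agree_off R x x' ->
  \sum_(y | agree_off R z y) crested_product P p0 x y =
  \sum_(y | agree_off R z y) crested_product P p0 x' y.
Proof.
move=> hxx; rewrite /crested_product exchange_big [in RHS]exchange_big /=.
apply: eq_bigr => i _.
have E (w : {dffun forall i, X i}) : \sum_(y | agree_off R z y)
  (p0 i * P i (w i) (y i) * \prod_(j | (j < i)%O) (#|X j|%:R)^-1 *
   \prod_(j | ~~ (j <= i)%O) (w j == y j)%:R) =
  (p0 i * \prod_(j | (j < i)%O) (#|X j|%:R)^-1) *
  \sum_(y | agree_off R z y) P i (w i) (y i) * @g K _ _ _ i w y.
  rewrite big_distrr /=; apply: eq_bigr => y _; rewrite /g; ring.
by rewrite !E (per_i (R:=R) (hP i) z hxx).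
Qed.

Theorem theorem3 (K : realFieldType) (d : Order.disp_t) (I : finPOrderType d)
  (X : I -> finType) (hX : forall i, (1 < #|X i|)%N)
  (P : forall i, X i -> X i -> K) (hP : forall i, stochastic (P i))
  (p0 : I -> K) (hp0 : strict_prob p0) (R : {set I}) :
  lumpable (crested_product P p0)
    (equivalence_partition (agree_off R) [set: {dffun forall i, X i}]).
Proof.
move=> Lk Ls /imsetP [w _ ->] /imsetP [z _ ->] x x'; rewrite !inE => hwx hwx'.
have hxx : agree_off R x x'.
  apply/forallP => j; apply/implyP => jR.
  by rewrite -(agreeP hwx jR) (agreeP hwx' jR).
rewrite (eq_bigl (fun y => agree_off R z y)); last by move=> y; rewrite !inE.
rewrite [RHS](eq_bigl (fun y => agree_off R z y)); last by move=> y; rewrite !inE.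
exact: key.
Qed.
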